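(* Let $R=\bigoplus_{i\ge0}R_i$ be a graded ring and $s,t\in R_0$ with $sR_0+tR_0=R_0$. Let $\eta\in\mathrm{GL}_n(R_{st},(R_+)_{st})$ with $e_1\eta=e_1$. Then there exist $\eta_1\in\mathrm{GL}_n(R_s,(R_+)_s)$ and $\eta_2\in\mathrm{GL}_n(R_t,(R_+)_t)$ such that $\eta=(\eta_1)_t(\eta_2)_s$ in $\mathrm{GL}_n(R_{st})$, and $e_1\eta_i=e_1$ for $i=1,2$.
   Context: Rings are commutative Noetherian with $1\ne0$ of finite Krull dimension; a graded ring is $R=\bigoplus_{i\ge0}R_i$ with non-trivial $\mathbb N$-grading and $R_+=\bigoplus_{i\ge1}R_i$. For an ideal $I\subset B$, $\mathrm{GL}_n(B,I)=\{\alpha\in\mathrm{GL}_n(B):\alpha\equiv\mathrm{Id}\bmod I\}$. $e_1=(1,0,\dots,0)$. For a matrix $\beta$ over $R_s$, $\beta_t$ denotes its image over $R_{st}$. *)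

(* Defs.v *)
From HB Require Import structures.
From mathcomp Require Import all_boot all_order all_algebra.
Set Implicit Arguments. Unset Strict Implicit. Unset Printing Implicit Defensive.
Import Order.TTheory GRing.Theory Num.Theory.
Local Open Scope ring_scope.

Section CommAlg.
Variable R : comNzRingType.

Definition is_ideal (I : R -> Prop) : Prop :=
  [/\ I 0, (forall x y, I x -> I y -> I (x + y)) & (forall r x, I x -> I (r * x))].

Definition is_prime_ideal (P : R -> Prop) : Prop :=
  [/\ is_ideal P, ~ P 1 & (forall x y, P (x * y) -> P x \/ P y)].

Definition noetherian : Prop :=
  forall I : nat -> R -> Prop, (forall k, is_ideal (I k)) ->
    (forall k x, I k x -> I k.+1 x) ->
    exists N, forall k x, (N <= k)%N -> I k x -> I N x.

Definition finite_krull_dim : Prop :=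
  exists d : nat, forall (k : nat) (P : nat -> R -> Prop),
    (forall i, (i <= k)%N -> is_prime_ideal (P i)) ->
    (forall i, (i < k)%N -> (forall x, P i x -> P i.+1 x) /\ exists x, P i.+1 x /\ ~ P i x) ->
    (k <= d)%N.

(* G i is the homogeneous component R_i *)
Definition is_grading (G : nat -> R -> Prop) : Prop :=
  [/\ (forall i, G i 0) /\
      (forall i x y, G i x -> G i y -> G i (x - y)),
      (forall i j x y, G i x -> G j y -> G (i + j)%N (x * y)),
      (forall x, exists (N : nat) (f : nat -> R),
          (forall i, G i (f i)) /\ x = \sum_(0 <= i < N) f i),
      (forall (N : nat) (f : nat -> R), (forall i, G i (f i)) ->
          \sum_(0 <= i < N) f i = 0 -> forall i, (i < N)%N -> f i = 0)
    &
      exists i x, [/\ (0 < i)%N, G i x & x != 0]].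

Definition Rplus (G : nat -> R -> Prop) (x : R) : Prop :=
  exists (N : nat) (f : nat -> R), (forall i, G i (f i)) /\ x = \sum_(1 <= i < N) f i.

(* ---------- Matrices over the localization R_s = R[1/s] ----------
   An n x n matrix over R_s is represented by a pair (A, k) with A over R,
   standing for the matrix s^-k A.  Two such pairs denote the same matrix
   over R_s iff they agree after multiplying by a power of s (usual
   definition of the localization). *)
Variable n : nat.
Definition lmx := ('M[R]_n * nat)%type.

Definition lmx_eq (s : R) (X Y : lmx) : Prop :=
  exists m : nat, s ^+ m *: (s ^+ Y.2 *: X.1 - s ^+ X.2 *: Y.1) = 0.

Definition lmx_mul (X Y : lmx) : lmx := (X.1 *m Y.1, (X.2 + Y.2)%N).

Definition lmx_one : lmx := (1%:M, 0%N).

Definition lmx_GL (s : R) (X : lmx) : Prop :=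
  exists Y : lmx, lmx_eq s (lmx_mul X Y) lmx_one /\ lmx_eq s (lmx_mul Y X) lmx_one.

(* X = Id mod I_s, for an ideal I of R: every entry of s^-k A - Id lies in
   I_s, i.e. s^m (A i j - delta_ij s^k) lies in I for some m *)
Definition lmx_congId (s : R) (I : R -> Prop) (X : lmx) : Prop :=
  exists m : nat, forall i j : 'I_n,
    I (s ^+ m * (X.1 i j - (i == j)%:R * s ^+ X.2)).

Definition lmx_GLI (s : R) (I : R -> Prop) (X : lmx) : Prop :=
  lmx_GL s X /\ lmx_congId s I X.

Definition lmx_e1 (s : R) (X : lmx) : Prop :=
  exists m : nat, forall i j : 'I_n, nat_of_ord i = 0%N ->
    s ^+ m * (X.1 i j - (nat_of_ord j == 0%N)%:R * s ^+ X.2) = 0.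

(* the image over R_{st} of a matrix over R_s: s^-k A |-> (st)^-k (t^k A) *)
Definition lmx_loc (t : R) (X : lmx) : lmx := (t ^+ X.2 *: X.1, X.2).

End CommAlg.

(* Main.v *)
Require Import Defs.
From HB Require Import structures.
From mathcomp Require Import all_boot all_order all_algebra.
From mathcomp Require Import ring zify.
From Stdlib Require Import ClassicalEpsilon Lia.
Import GRing.Theory.
Local Open Scope ring_scope.

Module Helpers.
Set Implicit Arguments. Unset Strict Implicit. Unset Printing Implicit Defensive.

Section Graded.
Variable R : comNzRingType.
Variable G : nat -> R -> Prop.
Hypothesis hG : is_grading G.

Lemma G0 i : G i 0. Proof. by case: hG => -[]. Qed.
Lemma GB i x y : G i x -> G i y -> G i (x - y). Proof. by case: hG => -[_ h] _ _ _ _; apply: h. Qed.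
Lemma GN i x : G i x -> G i (- x). Proof. by move=> h; rewrite -sub0r; apply: GB => //; apply: G0. Qed.
Lemma GD i x y : G i x -> G i y -> G i (x + y).
Proof. by move=> hx hy; rewrite -[y]opprK; apply: GB => //; apply: GN. Qed.
Lemma GM i j x y : G i x -> G j y -> G (i + j)%N (x * y). Proof. by case: hG => _ h _ _ _; apply: h. Qed.
Lemma Gsum i (I : Type) (r : seq I) (Pr : pred I) (F : I -> R) :
  (forall k, Pr k -> G i (F k)) -> G i (\sum_(k <- r | Pr k) F k).
Proof. move=> h; elim/big_ind: _ => //; [exact: G0 | exact: GD]. Qed.

Definition homog (p : {poly R}) := forall i, G i p`_i.

Lemma homog_uniq (p q : {poly R}) : homog p -> homog q -> p.[1] = q.[1] -> p = q.
Proof.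
move=> hp hq e; apply/eqP; rewrite -subr_eq0; apply/eqP.
set d := p - q.
have hd : homog d by move=> i; rewrite coefB; apply: GB.
have d1 : d.[1] = 0 by rewrite hornerD hornerN e subrr.
apply/polyP => i; rewrite coef0.
case: hG => _ _ _ hdir _.
have := hdir (size d) (fun i => d`_i) hd.
rewrite horner_coef in d1.
have -> : \sum_(0 <= i0 < size d) d`_i0 = 0.
  by rewrite big_mkord -[RHS]d1; apply: eq_bigr => j _; rewrite expr1n mulr1.
move=> /(_ erefl i) h.
case: (ltnP i (size d)) => hi; first exact: h.
by rewrite nth_default.
Qed.

Lemma dec_ex x : exists p : {poly R}, homog p /\ p.[1] = x.
Proof.
case: hG => _ _ hcov _ _.
have [N [f [hf ->]]] := hcov x.
exists (\poly_(i < N) f i); split.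
  by move=> i; rewrite coef_poly; case: ifP => _; [apply: hf | apply: G0].
rewrite horner_poly big_mkord; apply: eq_bigr => i _; by rewrite expr1n mulr1.
Qed.

Definition P (x : R) : {poly R} := proj1_sig (constructive_indefinite_description _ (dec_ex x)).
Lemma P_homog x : homog (P x).
Proof. by rewrite /P; case: constructive_indefinite_description => p []. Qed.
Lemma P1 x : (P x).[1] = x.
Proof. by rewrite /P; case: constructive_indefinite_description => p []. Qed.
Lemma PE x p : homog p -> p.[1] = x -> P x = p.
Proof. move=> hp e; apply: homog_uniq => //; [exact: P_homog | by rewrite P1]. Qed.

Lemma PB x y : P (x - y) = P x - P y.
Proof.
apply: PE; last by rewrite hornerD hornerN !P1.
by move=> i; rewrite coefB; apply: GB; apply: P_homog.
Qed.

Lemma PM x y : P (x * y) = P x * P y.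
Proof.
apply: PE; last by rewrite hornerM !P1.
move=> i; rewrite coefM; apply: Gsum => -[j hj] _ /=.
have := GM (@P_homog x j) (@P_homog y (i - j)%N); by rewrite subnKC // -ltnS.
Qed.

Lemma P_hom i x : G i x -> P x = x *: 'X^i.
Proof.
move=> hx; apply: PE; last by rewrite hornerZ hornerXn expr1n mulr1.
move=> j; rewrite coefZ coefXn; case: eqP => [->|_]; first by rewrite mulr1.
rewrite mulr0; exact: G0.
Qed.

Lemma G0_1 : G 0 1.
Proof.
set e := P 1.
have key : forall x, P x = P x * e by move=> x; rewrite -PM mulr1.
have he j : G j e`_j by apply: P_homog.
have e0e : forall j, (0 < j)%N -> e`_0 * e`_j = 0.
  move=> j hj; have := congr1 (fun p : {poly R} => p`_j) (key (e`_0)); rewrite /= (P_hom (he 0%N)).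
  rewrite coefZ coefXn -scalerAl coefZ mul1r; case: j hj => // j _; by rewrite mulr0 => <-.
have ee : forall j, e`_j * e`_0 = e`_j.
  move=> j; have := congr1 (fun p : {poly R} => p`_j) (key (e`_j)); rewrite /= (P_hom (he j)).
  by rewrite coefZ coefXn eqxx mulr1 -scalerAl coefZ coefXnM ltnn subnn => <-.
have ej : forall j, (0 < j)%N -> e`_j = 0 by move=> j hj; rewrite -ee mulrC e0e.
have : e = (e`_0)%:P.
  apply/polyP => j; rewrite coefC; case: j => [|j] //=; exact: ej.
move=> E; have := P1 1; rewrite -/e E hornerC => <-; exact: he.
Qed.

Lemma P_G0 x : G 0 x -> P x = x%:P.
Proof. by move=> h; rewrite (P_hom h) expr0 alg_polyC. Qed.

Lemma P_one : P 1 = 1. Proof. by rewrite (P_G0 G0_1). Qed.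

HB.instance Definition _ := GRing.isZmodMorphism.Build R {poly R} P PB.
HB.instance Definition _ := GRing.isMonoidMorphism.Build R {poly R} P (P_one, PM).


Definition phi (l : R) : {rmorphism R -> R} := horner_eval l \o P.
Lemma phiE l x : phi l x = (P x).[l]. Proof. by []. Qed.

Lemma phi_G0 l x : G 0 x -> phi l x = x.
Proof. by move=> h; rewrite phiE P_G0 // hornerC. Qed.
Lemma phi_1 x : phi 1 x = x. Proof. by rewrite phiE P1. Qed.

Lemma GX0 x k : G 0 x -> G 0 (x ^+ k).
Proof. move=> h; elim: k => [|k ih]; first exact: G0_1. by rewrite exprS; apply: (GM h ih). Qed.

Lemma GMl0 i g x : G 0 g -> G i x -> G i (g * x).
Proof. by move=> hg hx; apply: (GM hg hx). Qed.

Lemma Rplus_coef0 x : Rplus G x <-> (P x)`_0 = 0.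
Proof.
split.
  move=> [N [f [hf ->]]].
  set q := \poly_(i < N) (if i == 0%N then 0 else f i).
  have -> : P (\sum_(1 <= i < N) f i) = q.
    apply: PE.
      move=> i; rewrite coef_poly; case: ifP => _; last exact: G0.
      by case: ifP => _; [exact: G0 | exact: hf].
    rewrite horner_poly; case: N {q} => [|N]; first by rewrite big_ord0 big_geq.
    rewrite big_ord_recl /= mul0r add0r big_add1 /= big_mkord; apply: eq_bigr => i _.
    by rewrite expr1n mulr1.
  by rewrite /q coef_poly; case: ifP.
move=> h; exists (size (P x)), (fun i => (P x)`_i); split; first exact: P_homog.
rewrite -{1}(P1 x) horner_coef.
case E: (size (P x)) => [|N]; first by rewrite big_ord0 big_geq.
rewrite big_ord_recl /= h expr1n mulr1 add0r big_add1 /= big_mkord; apply: eq_bigr => i _.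
by rewrite expr1n mulr1.
Qed.

Lemma Rplus0 : Rplus G 0.
Proof. by apply/Rplus_coef0; rewrite raddf0 coef0. Qed.
Lemma RplusD x y : Rplus G x -> Rplus G y -> Rplus G (x + y).
Proof. by move=> /Rplus_coef0 hx /Rplus_coef0 hy; apply/Rplus_coef0; rewrite raddfD coefD hx hy addr0. Qed.
Lemma RplusMl r x : Rplus G x -> Rplus G (r * x).
Proof. by move=> /Rplus_coef0 hx; apply/Rplus_coef0; rewrite rmorphM coef0M hx mulr0. Qed.
Lemma RplusMr r x : Rplus G x -> Rplus G (x * r).
Proof. by rewrite mulrC; apply: RplusMl. Qed.
Lemma Rplus_sum (I : Type) (r : seq I) (Pr : pred I) (F : I -> R) :
  (forall k, Pr k -> Rplus G (F k)) -> Rplus G (\sum_(k <- r | Pr k) F k).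
Proof. move=> h; elim/big_ind: _ => //; [exact: Rplus0 | exact: RplusD]. Qed.

Lemma phi0_Rplus x : Rplus G x -> phi 0 x = 0.
Proof. by move=> /Rplus_coef0 h; rewrite phiE horner_coef0. Qed.

Definition cc (a b : R) (i : nat) := \sum_(j < i) b ^+ (i.-1 - j) * a ^+ j.
Definition chi (a b x : R) := \sum_(i < size (P x)) cc a b i * (P x)`_i.

Lemma chiE a b x N : (size (P x) <= N)%N -> chi a b x = \sum_(i < N) cc a b i * (P x)`_i.
Proof.
move=> hN; rewrite /chi (big_ord_widen N (fun i => cc a b i * (P x)`_i) hN) big_mkcond /=.
apply: eq_bigr => i _; case: ifP => // /negbT; rewrite -leqNgt => hi.
by rewrite nth_default // mulr0.
Qed.

Lemma chi_diff a b x : phi b x - phi a x = (b - a) * chi a b x.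
Proof.
rewrite !phiE !horner_coef -sumrB /chi mulr_sumr; apply: eq_bigr => i _.
by rewrite -mulrBr subrXX mulrA [_ * (P x)`_i]mulrC mulrA.
Qed.

Lemma cc_G0 a b i : G 0 a -> G 0 b -> G 0 (cc a b i).
Proof. by move=> ha hb; apply: Gsum => j _; apply: (GM (GX0 _ hb) (GX0 _ ha)). Qed.

Lemma chi_Rplus a b x : G 0 a -> G 0 b -> Rplus G (chi a b x).
Proof.
move=> ha hb; apply/Rplus_coef0.
set q := \poly_(i < size (P x)) (cc a b i * (P x)`_i).
have -> : P (chi a b x) = q.
  apply: PE.
    move=> i; rewrite coef_poly; case: ifP => _; last exact: G0.
    exact: (GM (cc_G0 i ha hb) (P_homog x i)).
  by rewrite horner_poly; apply: eq_bigr => i _; rewrite expr1n mulr1.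
rewrite /q coef_poly; case: ifP => // _; by rewrite /cc big_ord0 mul0r.
Qed.

Lemma chi_G0 a b x : G 0 x -> chi a b x = 0.
Proof.
move=> h; rewrite /chi P_G0 //; apply: big1 => -[i hi] _ /=.
case: i hi => [|i] hi; first by rewrite /cc big_ord0 mul0r.
by rewrite coefC mulr0.
Qed.

Lemma chi_scale a b g x : G 0 g -> chi a b (g * x) = g * chi a b x.
Proof.
move=> hg.
have e : P (g * x) = g *: P x by rewrite rmorphM /= P_G0 // mul_polyC.
rewrite (@chiE a b (g * x) (size (P x))); last by rewrite e size_scale_leq.
rewrite /chi mulr_sumr; apply: eq_bigr => i _; by rewrite e coefZ mulrCA.
Qed.

End Graded.

Lemma tors (R : comNzRingType) (hN : noetherian R) (x y : R) :
  exists q, forall i z, (exists j, x ^+ j * (y ^+ i * z) = 0) ->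
                        exists j, x ^+ j * (y ^+ q * z) = 0.
Proof.
pose I k z := exists j, x ^+ j * (y ^+ k * z) = 0.
have hI : forall k, is_ideal (I k).
  move=> k; split.
  - by exists 0%N; rewrite !mulr0.
  - move=> a b [j1 h1] [j2 h2]; exists (j1 + j2)%N.
    rewrite (_ : _ * _ = x ^+ j2 * (x ^+ j1 * (y ^+ k * a)) + x ^+ j1 * (x ^+ j2 * (y ^+ k * b))).
      by rewrite h1 h2 !mulr0 addr0.
    rewrite exprD; ring.
  - move=> r a [j h]; exists j; rewrite (_ : _ * _ = r * (x ^+ j * (y ^+ k * a))); first by rewrite h mulr0.
    ring.
have hmon : forall k a, I k a -> I k.+1 a.
  move=> k a [j h]; exists j; rewrite (_ : _ * _ = y * (x ^+ j * (y ^+ k * a))); first by rewrite h mulr0.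
  rewrite exprS; ring.
have [N hN'] := hN I hI hmon.
exists N => i z hz; case: (leqP N i) => hi; first exact: hN' hi hz.
move: hz => [j h]; exists j.
rewrite -(subnKC (ltnW hi)) exprD (_ : _ * _ = y ^+ (N - i) * (x ^+ j * (y ^+ i * z))); first by rewrite h mulr0.
ring.
Qed.

Lemma unif (T : finType) (Q : T -> nat -> Prop) :
  (forall a j j', (j <= j')%N -> Q a j -> Q a j') -> (forall a, exists j, Q a j) ->
  exists j, forall a, Q a j.
Proof.
move=> hmon hex.
suff: forall r : seq T, exists j, forall a, a \in r -> Q a j.
  by move=> /(_ (enum T)) [j hj]; exists j => a; apply: hj; rewrite mem_enum.
elim=> [|b r [j ih]]; first by exists 0%N.
have [jb hb] := hex b.
exists (j + jb)%N => a; rewrite inE => /orP [/eqP ->|ha].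
  by apply: hmon hb; rewrite leq_addl.
by apply: hmon (ih a ha); rewrite leq_addr.
Qed.

Lemma tors_mx (R : comNzRingType) (x y : R) q n :
  (forall i z, (exists j, x ^+ j * (y ^+ i * z) = 0) -> exists j, x ^+ j * (y ^+ q * z) = 0) ->
  forall i (Z : 'M[R]_n), (exists j, x ^+ j *: (y ^+ i *: Z) = 0) ->
    exists j, x ^+ j *: (y ^+ q *: Z) = 0.
Proof.
move=> hq i Z [j hj].
have := @unif ('I_n * 'I_n)%type (fun a j => x ^+ j * (y ^+ q * Z a.1 a.2) = 0).
case.
- move=> a j1 j2 hle h; by rewrite -(subnKC hle) exprD (mulrC (x ^+ j1)) -mulrA h mulr0.
- move=> [a b]; apply: (hq i); exists j.
  by have := congr1 (fun M : 'M_n => M a b) hj; rewrite /= !mxE.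
- move=> j' h; exists j'; apply/matrixP => a b; rewrite !mxE.
  exact: (h (a, b)).
Qed.

Lemma lift (R : comNzRingType) (x y : R) q n (Z Z' : 'M[R]_n) j L M :
  (forall i z, (exists j, x ^+ j * (y ^+ i * z) = 0) -> exists j, x ^+ j * (y ^+ q * z) = 0) ->
  (q <= M)%N -> x ^+ j *: (y ^+ L *: Z) = 0 -> Z = y ^+ M *: Z' ->
  exists j, x ^+ j *: Z = 0.
Proof.
move=> hq hM hZ eZ.
have [j' hj'] : exists j', x ^+ j' *: (y ^+ q *: Z') = 0.
  apply: (tors_mx hq (i := (L + M)%N)).
  by exists j; rewrite exprD -scalerA -eZ.
exists j'; rewrite eZ -(subnKC hM) exprD -scalerA.
have -> : x ^+ j' *: (y ^+ q *: (y ^+ (M - q) *: Z')) = y ^+ (M - q) *: (x ^+ j' *: (y ^+ q *: Z')).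
  by rewrite !scalerA; congr (_ *: _); ring.
by rewrite hj' scaler0.
Qed.

Lemma prodform (R : comNzRingType) n (p r : R) a b M (U V : 'M[R]_n) :
  (p ^+ a *: 1%:M + r ^+ M *: U) *m (p ^+ b *: 1%:M + r ^+ M *: V) - p ^+ (a + b) *: 1%:M
  = r ^+ M *: (p ^+ a *: V + p ^+ b *: U + r ^+ M *: (U *m V)).
Proof.
rewrite mulmxDl !mulmxDr -!scalemxAl -!scalemxAr !mul1mx !mulmx1.
apply/matrixP => i j; rewrite !mxE !exprD; ring.
Qed.

Lemma GLstep (R : comNzRingType) (x y : R) q n M a b (U V : 'M[R]_n) :
  (forall i z, (exists j, y ^+ j * (x ^+ i * z) = 0) -> exists j, y ^+ j * (x ^+ q * z) = 0) ->
  (q <= M)%N ->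
  x ^+ (a + b) *: ((y ^+ a *: 1%:M + x ^+ M *: U) *m (y ^+ b *: 1%:M + x ^+ M *: V))
     = (y * x) ^+ (a + b) *: 1%:M ->
  lmx_eq y (lmx_mul (y ^+ a *: 1%:M + x ^+ M *: U, a) (y ^+ b *: 1%:M + x ^+ M *: V, b))
    (lmx_one R n).
Proof.
move=> hq hM h.
rewrite /lmx_eq /lmx_mul /lmx_one /= expr0 scale1r.
apply: (lift hq hM (j := 0%N) (L := (a + b)%N)); last exact: prodform.
rewrite expr0 scale1r scalerBr h scalerA -exprMn mulrC subrr //.
Qed.

Lemma e1step (R : comNzRingType) (x y : R) n M a (U : 'M[R]_n) :
  (forall i j : 'I_n, nat_of_ord i = 0%N -> y ^+ M * U i j = 0) ->
  lmx_e1 x (x ^+ a *: 1%:M + y ^+ M *: U, a).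
Proof.
move=> hU; exists 0%N => i j hi /=; rewrite !mxE expr0 mul1r.
have -> : (i == j) = (nat_of_ord j == 0%N) by rewrite -val_eqE /= hi eq_sym.
by rewrite mulrC addrAC subrr add0r hU.
Qed.

Lemma norm_one (R : comNzRingType) n (x : R) m1 m (A : 'M[R]_n) e : (m1 <= m)%N ->
  x ^+ m1 *: (x ^+ 0 *: A - x ^+ e *: 1%:M) = 0 -> x ^+ m *: A = x ^+ (m + e) *: 1%:M.
Proof.
move=> hm h; apply/eqP; rewrite -subr_eq0; apply/eqP.
rewrite -(subnKC hm) (_ : _ - _ = x ^+ (m - m1) *: (x ^+ m1 *: (x ^+ 0 *: A - x ^+ e *: 1%:M))).
  by rewrite h scaler0.
apply/matrixP => i j; rewrite !mxE !exprD expr0; ring.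
Qed.

Lemma step (R : comNzRingType) (x y : R) N : x + y = 1 ->
  x ^+ N + y * \sum_(i < N) 1 ^+ (N.-1 - i) * x ^+ i = 1.
Proof.
move=> h; have := subrXX 1 x N; rewrite expr1n => e.
have -> : y = 1 - x by rewrite -h addrC addKr.
by rewrite -e addrC subrK.
Qed.

Lemma congstep (R : comNzRingType) (G : nat -> R -> Prop) (hG : is_grading G)
  (x y : R) n M a (U : 'M[R]_n) :
  (forall i j, Rplus G (U i j)) ->
  lmx_congId x (Rplus G) (x ^+ a *: 1%:M + y ^+ M *: U, a).
Proof.
move=> hU; exists 0%N => i j /=; rewrite !mxE expr0 mul1r.
rewrite (_ : _ - _ = y ^+ M * U i j); first exact: (RplusMl hG _ (hU i j)).
by rewrite mulrC addrAC subrr add0r.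
Qed.


Section Test.
Variable R : comNzRingType.
Variable G : nat -> R -> Prop.
Hypothesis hG : is_grading G.

Lemma powsplit (s t a b : R) N : G 0 s -> G 0 t -> G 0 a -> G 0 b -> s * a + t * b = 1 ->
  exists a' b', [/\ G 0 a', G 0 b' & s ^+ N * a' + t ^+ N * b' = 1].
Proof.
move=> hs ht ha hb e.
have hsum : forall z, G 0 z -> G 0 (\sum_(i < N) 1 ^+ (N.-1 - i) * z ^+ i).
  move=> z hz; apply: (Gsum hG) => i _; apply: (GM hG (GX0 hG _ (G0_1 hG)) (GX0 hG _ hz)).
have e1 := step N e.
set d := \sum_(i < N) _ in e1.
have hd : G 0 d by apply: hsum; apply: (GM hG hs ha).
rewrite addrC in e1.
have e2 := step N e1.
set d2 := \sum_(i < N) _ in e2.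
have hd2 : G 0 d2 by apply: hsum; apply: (GM hG (GM hG ht hb) hd).
exists (a ^+ N * d2), ((b * d) ^+ N); split.
- by apply: (GM hG (GX0 hG _ ha) hd2).
- exact: (GX0 hG _ (GM hG hb hd)).
rewrite -e2 addrC; congr (_ + _); first by rewrite -mulrA [RHS]exprMn.
by rewrite exprMn mulrA.
Qed.
End Test.

Lemma sandwich (R : comNzRingType) n (a b : R) (X Y Z W : 'M[R]_n) :
  (a *: (X *m Y)) *m (b *: (Z *m W)) = a *: ((X *m (b *: (Y *m Z))) *m W).
Proof. by rewrite -scalemxAl -!scalemxAr -scalemxAl !mulmxA. Qed.

Lemma sandwich2 (R : comNzRingType) n (a b : R) (X Y Z : 'M[R]_n) :
  (a *: (X *m Y)) *m (b *: Z) = a *: (X *m (b *: (Y *m Z))).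
Proof. by rewrite -scalemxAl -!scalemxAr mulmxA. Qed.

Lemma sandwich3 (R : comNzRingType) n (a b : R) (X Y : 'M[R]_n) :
  (a *: X) *m (b *: Y) = b *: (a *: (X *m Y)).
Proof. by rewrite -scalemxAl -scalemxAr scalerA mulrC -scalerA. Qed.

End Helpers.
Import Helpers.

Theorem mainTheorem5 (R : comNzRingType) (G : nat -> R -> Prop)
  (hNoeth : noetherian R) (hdim : finite_krull_dim R)
  (hG : is_grading G) (s t : R) (hs : G 0%N s) (ht : G 0%N t)
  (hst : forall x, G 0%N x <->
           exists a b, [/\ G 0%N a, G 0%N b & x = s * a + t * b])
  (n : nat) (eta : lmx R n)
  (heta : lmx_GLI (s * t) (Rplus G) eta)
  (he1 : lmx_e1 (s * t) eta) :
  exists eta1 eta2 : lmx R n,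
    [/\ lmx_GLI s (Rplus G) eta1, lmx_GLI t (Rplus G) eta2,
        lmx_eq (s * t) eta (lmx_mul (lmx_loc t eta1) (lmx_loc s eta2)),
        lmx_e1 s eta1 & lmx_e1 t eta2].
Proof.
case: eta heta he1 => B k [[[C k'] [[m1 h1] [m2 h2]]] [m3 h3]] [m4 h4].
rewrite /= in h1 h2 h3 h4.
set S := s * t in h1 h2 h3 h4 *.
set K := (k + k')%N in h1.
have hS : G 0 S by apply: (GM hG hs ht).
set m := (m1 + m2 + m3 + m4)%N.
have H1 : S ^+ m *: (B *m C) = S ^+ (m + K) *: 1%:M.
  by apply: (norm_one _ h1); rewrite /m; lia.
have H2 : S ^+ m *: (C *m B) = S ^+ (m + K) *: 1%:M.
  rewrite /K [(k + k')%N]addnC; by apply: (norm_one _ h2); rewrite /m; lia.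
have hm3 : (m3 <= m)%N by rewrite /m; lia.
have hm4 : (m4 <= m)%N by rewrite /m; lia.
have H3 : forall i j, Rplus G (S ^+ m * (B i j - (i == j)%:R * S ^+ k)).
  move=> i j; rewrite -(subnKC hm3) exprD mulrAC mulrC; exact: (RplusMl hG _ (h3 i j)).
have H4 : forall i j : 'I_n, nat_of_ord i = 0%N -> S ^+ m * (B i j - (nat_of_ord j == 0%N)%:R * S ^+ k) = 0.
  move=> i j hi; by rewrite -(subnKC hm4) exprD mulrAC h4 // mul0r.
have hdelta : forall b : bool, G 0 (b%:R : R).
  by case; [exact: (G0_1 hG) | exact: (G0 hG)].
have [a [b [ha hb e]]] := (hst 1).1 (G0_1 hG).
have [q1 hq1] := tors hNoeth t s.
have [q2 hq2] := tors hNoeth s t.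
set M := (q1 + q2 + m)%N.
set N := (K + M)%N.
have [a' [b' [ha' hb' euv]]] := powsplit hG N hs ht ha hb (esym e).
set u := s ^+ N * a' in euv.
set v := t ^+ N * b' in euv.
have hu : G 0 u by apply: (GM hG (GX0 hG _ hs) ha').
have ev : v = 1 - u by rewrite -euv addrC addKr.
set Bu := map_mx (phi hG u) B.
set Cu := map_mx (phi hG u) C.
set B0 := map_mx (phi hG 0) B.
set C0 := map_mx (phi hG 0) C.
set Xu := map_mx (chi hG 0 u) B.
set Xc := map_mx (chi hG 0 u) C.
set Xv := map_mx (chi hG u 1) B.
have F1 : Bu = B0 + u *: Xu.
  apply/matrixP => i j; rewrite !mxE; have := chi_diff hG 0 u (B i j).
  by rewrite subr0 => <-; rewrite addrC subrK.
have F1c : Cu = C0 + u *: Xc.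
  apply/matrixP => i j; rewrite !mxE; have := chi_diff hG 0 u (C i j).
  by rewrite subr0 => <-; rewrite addrC subrK.
have F2 : B = Bu + v *: Xv.
  apply/matrixP => i j; rewrite !mxE; have := chi_diff hG u 1 (B i j).
  by rewrite phi_1 -ev => <-; rewrite addrC subrK.
have phiS : forall l p, phi hG l (S ^+ p) = S ^+ p by move=> l p; apply: phi_G0; apply: GX0.
have F3 : S ^+ m *: B0 = S ^+ (m + k) *: 1%:M.
  apply/matrixP => i j; rewrite !mxE; have := phi0_Rplus hG (H3 i j).
  rewrite rmorphM rmorphB rmorphM phiS phiS (phi_G0 _ _ (hdelta _)) => /eqP.
  rewrite mulrBr subr_eq0 => /eqP ->; rewrite exprD; ring.
have F4 : S ^+ m *: (Bu *m Cu) = S ^+ (m + K) *: 1%:M.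
  by have := congr1 (map_mx (phi hG u)) H1; rewrite !map_mxZ map_mxM map_mx1 !phiS.
have F5 : S ^+ m *: (Cu *m Bu) = S ^+ (m + K) *: 1%:M.
  by have := congr1 (map_mx (phi hG u)) H2; rewrite !map_mxZ map_mxM map_mx1 !phiS.
have F6 : S ^+ (m + m + k) *: C0 = S ^+ (m + m + K) *: 1%:M.
  have := congr1 (map_mx (phi hG 0)) H2; rewrite !map_mxZ map_mxM map_mx1 !phiS -/C0 -/B0 => h.
  have := congr1 (fun X => S ^+ m *: X) h.
  rewrite scalemxAl scalemxAr F3 -scalemxAr mulmx1 !scalerA -!exprD => h'.
  rewrite (_ : (m + m + k = m + k + m)%N); last by lia.
  rewrite h' (_ : (m + m + K = m + (m + K))%N) //; lia.
have hSm : G 0 (S ^+ m) by apply: GX0.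
have F8 : forall a0 b0 (i j : 'I_n), nat_of_ord i = 0%N -> S ^+ m * chi hG a0 b0 (B i j) = 0.
  move=> a0 b0 i j hi; rewrite -(chi_scale hG a0 b0 _ hSm).
  have -> : S ^+ m * B i j = S ^+ m * ((nat_of_ord j == 0%N)%:R * S ^+ k).
    by apply/eqP; rewrite -subr_eq0 -mulrBr H4.
  apply: chi_G0; apply: (GM hG hSm (GM hG (hdelta _) (GX0 hG _ hS))).
set m' := (m + m + k)%N.
set D := t ^+ (m + k) *: 1%:M + s ^+ M *: ((s ^+ k' * t ^+ m * a') *: Xu).
set D' := t ^+ (m' + k') *: 1%:M + s ^+ M *: ((s ^+ k * t ^+ m' * a') *: Xc).
set E := s ^+ (m + K) *: 1%:M + t ^+ M *: ((s ^+ m * b') *: (Xv *m Cu)).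
set E' := s ^+ (m + K) *: 1%:M + t ^+ M *: ((- (s ^+ m * b')) *: (Xv *m C)).
have R1 : s ^+ (m + k) *: D = S ^+ m *: Bu.
  rewrite F1 [in RHS]scalerDr F3 /D; apply/matrixP => i j; rewrite !mxE /u /N /K /S !exprD !exprMn; ring.
have R2 : s ^+ (m' + k') *: D' = S ^+ m' *: Cu.
  rewrite F1c [in RHS]scalerDr F6 /D' /m'; apply/matrixP => i j; rewrite !mxE /u /N /K /S !exprD !exprMn; ring.
have R3 : t ^+ (m + K) *: E = S ^+ m *: (B *m Cu).
  rewrite [in RHS]F2 mulmxDl -scalemxAl [in RHS]scalerDr F4 /E; apply/matrixP => i j.
  rewrite !mxE /v /N /K /S !exprD !exprMn; ring.
have F2' : Bu = B - v *: Xv by rewrite F2 addrK.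
have R4 : t ^+ (m + K) *: E' = S ^+ m *: (Bu *m C).
  rewrite F2' mulmxBl -scalemxAl [in RHS]scalerBr H1 /E'; apply/matrixP => i j.
  rewrite !mxE /v /N /K /S !exprD !exprMn; ring.
have hMm : M = (q1 + q2 + m)%N by [].
have hq1M : (q1 <= M)%N by rewrite /M; lia.
have hq2M : (q2 <= M)%N by rewrite /M; lia.
have PE1 : t ^+ ((m + K) + (m + K)) *: (E *m E') = (s * t) ^+ ((m + K) + (m + K)) *: 1%:M.
  clearbody E E'.
  rewrite exprD -scalerA scalemxAr scalemxAl R3 R4 sandwich F5 -scalemxAr mulmx1.
  rewrite -scalemxAl scalerA mulrC -scalerA H1 scalerA -exprD.
  congr (_ *: _); congr (_ ^+ _); lia.
have PE2 : t ^+ ((m + K) + (m + K)) *: (E' *m E) = (s * t) ^+ ((m + K) + (m + K)) *: 1%:M.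
  clearbody E E'.
  rewrite exprD -scalerA scalemxAr scalemxAl R3 R4 sandwich H2 -scalemxAr mulmx1.
  rewrite -scalemxAl scalerA mulrC -scalerA F4 scalerA -exprD.
  congr (_ *: _); congr (_ ^+ _); lia.
have PD1 : s ^+ ((m + k) + (m' + k')) *: (D *m D') = (t * s) ^+ ((m + k) + (m' + k')) *: 1%:M.
  clearbody D D'.
  rewrite exprD -scalerA scalemxAr scalemxAl R1 R2 sandwich3 F4 scalerA -exprD mulrC.
  congr (_ *: _); congr (_ ^+ _); rewrite /m' /K; lia.
have PD2 : s ^+ ((m' + k') + (m + k)) *: (D' *m D) = (t * s) ^+ ((m' + k') + (m + k)) *: 1%:M.
  clearbody D D'.
  rewrite exprD -scalerA scalemxAr scalemxAl R1 R2 sandwich3 scalerA mulrC -scalerA F5 scalerA -exprD mulrC.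
  congr (_ *: _); congr (_ ^+ _); rewrite /m' /K; lia.
exists (E, (m + K)%N), (D, (m + k)%N); split.
- split.
  + exists (E', (m + K)%N); split; exact: (GLstep hq2 hq2M).
  + apply: (congstep hG) => i j; rewrite !mxE; apply: (RplusMl hG); apply: (Rplus_sum hG) => l _.
    apply: (RplusMr hG); rewrite mxE; exact: (chi_Rplus hG _ hu (G0_1 hG)).
- split.
  + exists (D', (m' + k')%N); split; exact: (GLstep hq1 hq1M).
  + apply: (congstep hG) => i j; rewrite !mxE; apply: (RplusMl hG).
    exact: (chi_Rplus hG _ (G0 hG 0) hu).
- exists 0%N; rewrite /lmx_loc /lmx_mul /= expr0 scale1r.
  clearbody D E.
  rewrite R3 R1 sandwich2 F5 -scalemxAr mulmx1 !scalerA -!exprD; apply/eqP; rewrite subr_eq0; apply/eqP.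
  congr (_ *: _); congr (_ ^+ _); lia.
- apply: e1step => i j hi; rewrite !mxE mulrA mulr_sumr; apply: big1 => l _.
  have h := F8 u 1 i l hi; rewrite /Xv mxE hMm (exprD t (q1 + q2)%N m) (exprD t q1 q2).
  rewrite (_ : _ * _ = (t ^+ q1 * t ^+ q2 * b' * Cu l j) * (S ^+ m * chi hG u 1 (B i l))).
    by rewrite h mulr0.
  rewrite /S exprMn; ring.
- apply: e1step => i j hi; rewrite !mxE.
  have h := F8 0 u i j hi; rewrite hMm (exprD s (q1 + q2)%N m) (exprD s q1 q2).
  rewrite (_ : _ * _ = (s ^+ q1 * s ^+ q2 * s ^+ k' * a') * (S ^+ m * chi hG 0 u (B i j))).
    by rewrite h mulr0.
  rewrite /S exprMn; ring.
Qed.
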